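(* Let $(\lambda^*,\mathbf{s}^{-*},\mathbf{s}^{+*},\delta^*,\boldsymbol{\alpha}^*,\gamma^* )$ be an optimal solution of model (MIP) (defined in the context). Then $\lambda^*/\delta^*$ is a maximal element of $\Omega_o$, i.e. $\lambda^*/\delta^*\in\Omega_o$ and it has the maximum number of positive components among all elements of $\Omega_o$.
   Context: Data envelopment analysis setting. There are $n$ decision making units (DMUs) indexed by $J=\{1,\dots,n\}$, each using $m$ inputs to produce $s$ outputs; DMU$_j$ has input vector $\mathbf{x}_j=(x_{1j},\dots,x_{mj})^T\in\mathbb{R}^m_+$ and output vector $\mathbf{y}_j=(y_{1j},\dots,y_{sj})^T\in\mathbb{R}^s_+$; $\mathbf{X}=[\mathbf{x}_1\cdots\mathbf{x}_n]$, $\mathbf{Y}=[\mathbf{y}_1\cdots\mathbf{y}_n]$. Define $\mathbf{R}^-=(R^-_1,\dots,R^-_m)^T$, $\mathbf{R}^+=(R^+_1,\dots,R^+_s)^T$ by $1/R^-_i=\max_{j}x_{ij}-\min_j x_{ij}$ and $1/R^+_r=\max_j y_{rj}-\min_j y_{rj}$. For $o\in J$, the RAM model is: $\rho_o=\min\, 1-\frac{1}{m+s}(\mathbf{R}^{-T}\mathbf{s}^-+\mathbf{R}^{+T}\mathbf{s}^+)$ subject to $\mathbf{X}\lambda+\mathbf{s}^-=\mathbf{x}_o$, $\mathbf{Y}\lambda-\mathbf{s}^+=\mathbf{y}_o$, $\mathbf{1}^T\lambda=1$, $\lambda\ge 0,\mathbf{s}^-\ge0,\mathbf{s}^+\ge0$.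 A DMU is RAM-efficient if its optimal value $\rho$ equals $1$; let $E\subseteq J$ be the index set of RAM-efficient DMUs and $\mathbf{X}_E,\mathbf{Y}_E$ the submatrices of $\mathbf{X},\mathbf{Y}$ with columns in $E$. Fix the evaluated DMU $o\in J$. System (S): vectors $\lambda\in\mathbb{R}^{|E|}$, $\mathbf{s}^-\in\mathbb{R}^m$, $\mathbf{s}^+\in\mathbb{R}^s$, all nonnegative, with $\mathbf{X}_E\lambda+\mathbf{s}^-=\mathbf{x}_o$, $\mathbf{Y}_E\lambda-\mathbf{s}^+=\mathbf{y}_o$, $\mathbf{1}^T\lambda=1$, $\mathbf{R}^{-T}\mathbf{s}^-+\mathbf{R}^{+T}\mathbf{s}^+=(m+s)(1-\rho_o)$. Let $\Omega_o$ be the set of all $\lambda$ for which there exist $\mathbf{s}^-,\mathbf{s}^+$ such that $(\lambda,\mathbf{s}^-,\mathbf{s}^+)$ satisfies (S). A maximal element of $\Omega_o$ is an element of $\Omega_o$ with the maximum number of positive components. Model (MIP): maximize $\mathbf{1}^T\boldsymbol{\alpha}+\gamma$ over $\lambda\in\mathbb{R}^{|E|}$, $\mathbf{s}^-\in\mathbb{R}^m$, $\mathbf{s}^+\in\mathbb{R}^s$, $\delta\in\mathbb{R}$, $\boldsymbol{\alpha}\in\{0,1\}^{|E|}$, $\gamma\in\{0,1\}$ subject to $\mathbf{X}_E\lambda+\mathbf{s}^--\mathbf{x}_o\delta=\mathbf{0}$, $\mathbf{Y}_E\lambda-\mathbf{s}^+-\mathbf{y}_o\delta=\mathbf{0}$,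 $\mathbf{1}^T\lambda-\delta=0$, $\mathbf{R}^{-T}\mathbf{s}^-+\mathbf{R}^{+T}\mathbf{s}^+-(m+s)(1-\rho_o)\delta=0$, $\boldsymbol{\alpha}\le\lambda$, $\gamma\le\delta$, $\lambda\ge\mathbf{0}$, $\mathbf{s}^-\ge\mathbf{0}$, $\mathbf{s}^+\ge\mathbf{0}$, $\delta\ge0$. *)

(* Defs.v *)
From mathcomp Require Import all_boot all_order all_algebra.
Unset Printing Implicit Defensive.
Import Order.TTheory GRing.Theory Num.Theory.
Local Open Scope ring_scope.

(* DEA data: X : m inputs x n DMUs, Y : s outputs x n DMUs.
   Column j of X (resp. Y) is x_j (resp. y_j). *)

(* max_j a_j - min_j a_j, written as max over pairs of a_j - a_k
   (identical value; 0 when n = 0). *)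
Definition range_row {R : realFieldType} {n : nat} (a : 'I_n -> R) : R :=
  \big[Num.max/0]_(j < n) \big[Num.max/0]_(k < n) (a j - a k).

Definition Rminus {R : realFieldType} {m n : nat} (X : 'M[R]_(m, n)) (i : 'I_m) : R :=
  (range_row (fun j => X i j))^-1.

Definition Rplus {R : realFieldType} {s n : nat} (Y : 'M[R]_(s, n)) (r : 'I_s) : R :=
  (range_row (fun j => Y r j))^-1.

Definition weighted_slack {R : realFieldType} {m s n : nat}
  (X : 'M[R]_(m, n)) (Y : 'M[R]_(s, n)) (sm : 'I_m -> R) (sp : 'I_s -> R) : R :=
  \sum_(i < m) Rminus X i * sm i + \sum_(r < s) Rplus Y r * sp r.

Definition ram_feasible {R : realFieldType} {m s n : nat}
  (X : 'M[R]_(m, n)) (Y : 'M[R]_(s, n)) (o : 'I_n)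
  (lam : 'I_n -> R) (sm : 'I_m -> R) (sp : 'I_s -> R) : Prop :=
  [/\ (forall j, 0 <= lam j), (forall i, 0 <= sm i) & (forall r, 0 <= sp r)] /\
  [/\ (forall i, \sum_(j < n) X i j * lam j + sm i = X i o),
      (forall r, \sum_(j < n) Y r j * lam j - sp r = Y r o)
    & \sum_(j < n) lam j = 1].

Definition ram_obj {R : realFieldType} {m s n : nat}
  (X : 'M[R]_(m, n)) (Y : 'M[R]_(s, n)) (sm : 'I_m -> R) (sp : 'I_s -> R) : R :=
  1 - weighted_slack X Y sm sp / (m + s)%:R.

Definition ram_value {R : realFieldType} {m s n : nat}
  (X : 'M[R]_(m, n)) (Y : 'M[R]_(s, n)) (o : 'I_n) (rho : R) : Prop :=
  (exists lam sm sp, ram_feasible X Y o lam sm sp /\ ram_obj X Y sm sp = rho) /\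
  (forall lam sm sp, ram_feasible X Y o lam sm sp -> rho <= ram_obj X Y sm sp).

Definition ram_efficient {R : realFieldType} {m s n : nat}
  (X : 'M[R]_(m, n)) (Y : 'M[R]_(s, n)) (j : 'I_n) : Prop :=
  ram_value X Y j 1.

Definition Eidx {n : nat} (E : {set 'I_n}) : finType := {j : 'I_n | j \in E}.

Definition system_S {R : realFieldType} {m s n : nat}
  (X : 'M[R]_(m, n)) (Y : 'M[R]_(s, n)) (E : {set 'I_n}) (o : 'I_n) (rho : R)
  (lam : Eidx E -> R) (sm : 'I_m -> R) (sp : 'I_s -> R) : Prop :=
  [/\ (forall k, 0 <= lam k), (forall i, 0 <= sm i) & (forall r, 0 <= sp r)] /\
  [/\ (forall i, \sum_(k : Eidx E) X i (val k) * lam k + sm i = X i o),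
      (forall r, \sum_(k : Eidx E) Y r (val k) * lam k - sp r = Y r o),
      \sum_(k : Eidx E) lam k = 1
    & weighted_slack X Y sm sp = (m + s)%:R * (1 - rho)].

Definition in_Omega {R : realFieldType} {m s n : nat}
  (X : 'M[R]_(m, n)) (Y : 'M[R]_(s, n)) (E : {set 'I_n}) (o : 'I_n) (rho : R)
  (lam : Eidx E -> R) : Prop :=
  exists sm sp, system_S X Y E o rho lam sm sp.

Definition npos {R : realFieldType} {n : nat} {E : {set 'I_n}} (lam : Eidx E -> R) : nat :=
  #|[pred k : Eidx E | 0 < lam k]|.

Definition maximal_in_Omega {R : realFieldType} {m s n : nat}
  (X : 'M[R]_(m, n)) (Y : 'M[R]_(s, n)) (E : {set 'I_n}) (o : 'I_n) (rho : R)
  (lam : Eidx E -> R) : Prop :=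
  in_Omega X Y E o rho lam /\
  forall lam', in_Omega X Y E o rho lam' -> (npos lam' <= npos lam)%N.

(* Feasible set of model (MIP); alpha in {0,1}^|E|, gamma in {0,1} as bools. *)
Definition mip_feasible {R : realFieldType} {m s n : nat}
  (X : 'M[R]_(m, n)) (Y : 'M[R]_(s, n)) (E : {set 'I_n}) (o : 'I_n) (rho : R)
  (lam : Eidx E -> R) (sm : 'I_m -> R) (sp : 'I_s -> R) (delta : R)
  (alpha : Eidx E -> bool) (gamma : bool) : Prop :=
  [/\ (forall i, \sum_(k : Eidx E) X i (val k) * lam k + sm i - X i o * delta = 0),
      (forall r, \sum_(k : Eidx E) Y r (val k) * lam k - sp r - Y r o * delta = 0),
      \sum_(k : Eidx E) lam k - delta = 0
    & weighted_slack X Y sm sp - (m + s)%:R * (1 - rho) * delta = 0] /\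
  [/\ (forall k, (alpha k)%:R <= lam k) & (gamma%:R <= delta)] /\
  [/\ (forall k, 0 <= lam k), (forall i, 0 <= sm i), (forall r, 0 <= sp r)
    & 0 <= delta].

Definition mip_obj {n : nat} {E : {set 'I_n}} (alpha : Eidx E -> bool) (gamma : bool) : nat :=
  (\sum_(k : Eidx E) (alpha k : nat) + gamma)%N.

Definition mip_optimal {R : realFieldType} {m s n : nat}
  (X : 'M[R]_(m, n)) (Y : 'M[R]_(s, n)) (E : {set 'I_n}) (o : 'I_n) (rho : R)
  (lam : Eidx E -> R) (sm : 'I_m -> R) (sp : 'I_s -> R) (delta : R)
  (alpha : Eidx E -> bool) (gamma : bool) : Prop :=
  mip_feasible X Y E o rho lam sm sp delta alpha gamma /\
  forall lam' sm' sp' delta' alpha' gamma',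
    mip_feasible X Y E o rho lam' sm' sp' delta' alpha' gamma' ->
    (mip_obj alpha' gamma' <= mip_obj alpha gamma)%N.

(* Main.v *)
Require Import Defs.
From mathcomp Require Import all_boot all_order all_algebra.
From mathcomp Require Import ring.
Import Order.TTheory GRing.Theory Num.Theory.
Local Open Scope ring_scope.

Section H.
Variables (R : realFieldType) (m s n : nat) (X : 'M[R]_(m, n)) (Y : 'M[R]_(s, n)).

Lemma sum_delta (F : 'I_n -> R) j : \sum_k F k * (k == j)%:R = F j.
Proof.
rewrite (bigD1 j) //= eqxx mulr1 big1 ?addr0 // => k /negbTE ->; by rewrite mulr0.
Qed.

Lemma ws_scale sm sp t :
  weighted_slack X Y (fun i => sm i * t) (fun r => sp r * t) = weighted_slack X Y sm sp * t.
Proof.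
rewrite /weighted_slack mulrDl !mulr_suml; congr (_ + _); apply: eq_bigr => i _; by rewrite mulrA.
Qed.

Lemma ws_add sm sp tm tp c :
  weighted_slack X Y (fun i => sm i + c * tm i) (fun r => sp r + c * tp r) =
  weighted_slack X Y sm sp + c * weighted_slack X Y tm tp.
Proof.
rewrite /weighted_slack mulrDr !mulr_sumr.
rewrite addrACA -!big_split /=; congr (_ + _); apply: eq_bigr => i _;
  by rewrite mulrDr mulrCA.
Qed.

Lemma ws0 : weighted_slack X Y (fun _ => 0) (fun _ => 0) = 0.
Proof. by rewrite /weighted_slack !big1 ?addr0 // => i _; rewrite mulr0. Qed.

Lemma unit_feasible j : ram_feasible X Y j (fun k => (k == j)%:R) (fun _ => 0) (fun _ => 0)
  /\ ram_obj X Y (fun _ => 0) (fun _ => 0) = 1.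
Proof.
split; last by rewrite /ram_obj ws0 mul0r subr0.
split; first by split => // k; rewrite ler0n.
split.
- by move=> i; rewrite sum_delta addr0.
- by move=> r; rewrite sum_delta subr0.
- by rewrite (bigD1 j) //= eqxx big1 ?addr0 // => k /negbTE ->.
Qed.

Lemma support_eff o rho : ram_value X Y o rho ->
  exists lam0 sm0 sp0, ram_feasible X Y o lam0 sm0 sp0 /\ ram_obj X Y sm0 sp0 = rho /\
   forall j, 0 < lam0 j -> ram_efficient X Y j.
Proof.
case=> [[lam0 [sm0 [sp0 [Hf Hobj]]]] Hmin].
exists lam0, sm0, sp0; split => //; split => // j Hj.
split; first by have [H1 H2] := unit_feasible j; exists (fun k => (k == j)%:R), (fun _ => 0), (fun _ => 0).
move=> mu tm tp Hmu; case: (lerP 1 (ram_obj X Y tm tp)) => // Hlt; exfalso.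
case: Hf => [[Hl Hsm Hsp] [Hx Hy Hs]].
case: Hmu => [[Ml Mtm Mtp] [Mx My Ms]].
pose lam' k := lam0 k - lam0 j * (k == j)%:R + lam0 j * mu k.
pose sm' i := sm0 i + lam0 j * tm i.
pose sp' r := sp0 r + lam0 j * tp r.
have Hf' : ram_feasible X Y o lam' sm' sp'.
  split; first split.
  - move=> k; rewrite /lam'; apply: addr_ge0; last by apply: mulr_ge0; [exact: ltW|].
    by case: eqP => [->|_]; rewrite ?mulr1 ?subrr // mulr0 subr0.
  - by move=> i; apply: addr_ge0 => //; apply: mulr_ge0; [exact: ltW|].
  - by move=> r; apply: addr_ge0 => //; apply: mulr_ge0; [exact: ltW|].
  have key (Z : 'I_n -> R) : \sum_k Z k * lam' k =
      \sum_k Z k * lam0 k - lam0 j * Z j + lam0 j * \sum_k Z k * mu k.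
    rewrite /lam' -[lam0 j * Z j](sum_delta (fun k => lam0 j * Z k)) mulr_sumr -sumrB -big_split /=.
    by apply: eq_bigr => k _; rewrite !mulrDr mulrN !mulrA [Z k * lam0 j]mulrC.
  split.
  - move=> i; rewrite key /sm'.
    have E1 : \sum_k X i k * lam0 k = X i o - sm0 i by rewrite -(Hx i) addrK.
    have E2 : \sum_k X i k * mu k = X i j - tm i by rewrite -(Mx i) addrK.
    rewrite E1 E2; ring.
  - move=> r; rewrite key /sp'.
    have E1 : \sum_k Y r k * lam0 k = Y r o + sp0 r by rewrite -(Hy r) subrK.
    have E2 : \sum_k Y r k * mu k = Y r j + tp r by rewrite -(My r) subrK.
    rewrite E1 E2; ring.
  - have := key (fun _ => 1).
    have e1 (f : 'I_n -> R) : \sum_k 1 * f k = \sum_k f k.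
      by apply: eq_bigr => k _; rewrite mul1r.
    rewrite !e1 => ->.
    by rewrite Hs Ms mulr1 subrK.
have := Hmin _ _ _ Hf'.
rewrite /ram_obj /sm' /sp' ws_add -Hobj /ram_obj.
move: Hlt; rewrite /ram_obj ltrBlDr -ltrBlDl subrr => Hpos.
rewrite lerD2l lerN2 mulrDl gerDl -mulrA => H.
by have := mulr_gt0 Hj Hpos; rewrite ltNge H.
Qed.
End H.

Lemma sumE (R : realFieldType) n (E : {set 'I_n}) (F : 'I_n -> R) :
  (forall j, j \notin E -> F j = 0) ->
  \sum_(k : Eidx E) F (val k) = \sum_j F j.
Proof.
move=> H; rewrite /Eidx -(big_sub (mem E)) big_mkcond /=.
by apply: eq_bigr => j _; case: ifP => // /negbT /H ->.
Qed.

Lemma ws_rho (R : realFieldType) m s n (X : 'M[R]_(m, n)) (Y : 'M[R]_(s, n)) sm sp rho :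
  ram_obj X Y sm sp = rho -> weighted_slack X Y sm sp = (m + s)%:R * (1 - rho).
Proof.
rewrite /ram_obj => <-; rewrite opprB addrCA subrr addr0.
case: (posnP (m + s)) => [h|h].
  rewrite h mul0r /weighted_slack.
  have hm : m = 0%N by apply/eqP; rewrite -leqn0 -h leq_addr.
  have hs : s = 0%N by apply/eqP; rewrite -leqn0 -h leq_addl.
  subst m s.
  by rewrite !big_ord0 addr0.
by rewrite mulrC divfK // pnatr_eq0 -lt0n.
Qed.

Lemma scale_in_mip (R : realFieldType) m s n (X : 'M[R]_(m, n)) (Y : 'M[R]_(s, n))
  (E : {set 'I_n}) o rho (l : Eidx E -> R) :
  in_Omega X Y E o rho l ->
  exists lam sm sp delta alpha, mip_feasible X Y E o rho lam sm sp delta alpha true /\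
    mip_obj alpha true = (npos l + 1)%N.
Proof.
case=> sm [sp [[Hl Hsm Hsp] [Hx Hy Hs Hw]]].
pose t := 1 + \sum_k (l k)^-1.
have ht1 : 1 <= t by rewrite lerDl sumr_ge0 // => k _; rewrite invr_ge0.
have ht0 : 0 <= t by apply: le_trans ht1.
exists (fun k => l k * t), (fun i => sm i * t), (fun r => sp r * t), t, (fun k => 0 < l k).
split; last first.
  rewrite /mip_obj /npos; congr (_ + _)%N.
  rewrite -sum1_card [RHS]big_mkcond /=; apply: eq_bigr => k _; rewrite inE; by case: ifP.
have sc (Z : Eidx E -> R) : \sum_k Z k * (l k * t) = (\sum_k Z k * l k) * t.
  by rewrite mulr_suml; apply: eq_bigr => k _; rewrite mulrA.
split; [|split].
- split.
  + by move=> i; rewrite sc -mulrDl (Hx i) subrr.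
  + by move=> r; rewrite sc -mulrBl (Hy r) subrr.
  + have := sc (fun _ => 1).
    have e1 (f : Eidx E -> R) : \sum_k 1 * f k = \sum_k f k.
      by apply: eq_bigr => k _; rewrite mul1r.
    rewrite !e1 => ->.
    by rewrite Hs mul1r subrr.
  + by rewrite ws_scale Hw subrr.
- split; last exact: ht1.
  move=> k; case: (boolP (0 < l k)) => hk /=; last by apply: mulr_ge0 => //; exact: Hl.
  have : (l k)^-1 <= \sum_k (l k)^-1.
    rewrite (bigD1 k) //= lerDl sumr_ge0 // => i _; by rewrite invr_ge0.
  move=> h; apply: (@le_trans _ _ ((l k)^-1 * l k)); first by rewrite mulVf // gt_eqF.
  rewrite mulrC ler_pM2l //; apply: le_trans h _; by rewrite /t lerDr.
- by split => [k|i|r|//]; apply: mulr_ge0.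
Qed.

Theorem theorem1 (R : realFieldType) (m s n : nat)
  (X : 'M[R]_(m, n)) (Y : 'M[R]_(s, n))
  (HX : forall i j, 0 <= X i j) (HY : forall r j, 0 <= Y r j)
  (E : {set 'I_n}) (HE : forall j, j \in E <-> ram_efficient X Y j)
  (o : 'I_n) (rho : R) (Hrho : ram_value X Y o rho)
  (lam : Eidx E -> R) (sm : 'I_m -> R) (sp : 'I_s -> R) (delta : R)
  (alpha : Eidx E -> bool) (gamma : bool) :
  mip_optimal X Y E o rho lam sm sp delta alpha gamma ->
  maximal_in_Omega X Y E o rho (fun k => lam k / delta).
Proof.
move=> [Hfeas Hopt].
have [lam0 [sm0 [sp0 [Hf0 [Hobj0 Heff]]]]] := @support_eff _ _ _ _ X Y _ _ Hrho.
case: Hf0 => [[Hl0 Hsm0 Hsp0] [Hx0 Hy0 Hs0]].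
have Hz : forall j, j \notin E -> lam0 j = 0.
  move=> j hj; case: (ltrP 0 (lam0 j)) => h.
    by move: hj; have /(HE j) -> := Heff j h.
  by apply/eqP; rewrite eq_le h Hl0.
have Om0 : in_Omega X Y E o rho (fun k => lam0 (val k)).
  exists sm0, sp0; split; first by split.
  split.
  - move=> i; rewrite (@sumE _ _ E (fun j => X i j * lam0 j)) //.
    by move=> j /Hz ->; rewrite mulr0.
  - move=> r; rewrite (@sumE _ _ E (fun j => Y r j * lam0 j)) //.
    by move=> j /Hz ->; rewrite mulr0.
  - by rewrite (@sumE _ _ E lam0).
  - exact: ws_rho.
have bound : forall l, in_Omega X Y E o rho l -> (npos l + 1 <= mip_obj alpha gamma)%N.
  move=> l Hl; have [lam' [sm' [sp' [d [al [Hm Hob]]]]]] := @scale_in_mip _ _ _ _ X Y E o rho l Hl.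
  rewrite -Hob; exact: Hopt _ _ _ _ _ _ Hm.
case: Hfeas => [[Ex Ey Es Ew] [[Ha Hg] [Hl Hsm Hsp Hd]]].
have upper : (mip_obj alpha gamma <= npos lam + gamma)%N.
  rewrite /mip_obj leq_add2r /npos -sum1_card [X in (_ <= X)%N]big_mkcond /=.
  apply: leq_sum => k _; rewrite inE.
  case: (alpha k) (Ha k) => //= h; rewrite ifT //; exact: lt_le_trans ltr01 h.
have dpos : 0 < delta.
  rewrite lt_def Hd andbT; apply/negP => /eqP d0.
  have l0 : forall k, lam k = 0.
    have Ss : \sum_k lam k = 0 by move: Es; rewrite d0 subr0.
    by move=> k; apply: (@psumr_eq0P _ _ xpredT lam _ Ss) => // i _; exact: Hl.
  have : mip_obj alpha gamma = 0%N.
    rewrite /mip_obj big1 => [|k _].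
      by move: Hg; case: (gamma) => //=; rewrite d0 ler10.
    by case: (alpha k) (Ha k) => //=; rewrite l0 ler10.
  by move=> h; have := bound _ Om0; rewrite h addn1.
have dn0 : delta != 0 by rewrite gt_eqF.
have npos_eq : npos (fun k => lam k / delta) = npos lam.
  by rewrite /npos; apply: eq_card => k; rewrite !inE pmulr_lgt0 // invr_gt0.
have sc (Z : Eidx E -> R) : \sum_k Z k * (lam k / delta) = (\sum_k Z k * lam k) / delta.
  by rewrite mulr_suml; apply: eq_bigr => k _; rewrite mulrA.
split.
- exists (fun i => sm i / delta), (fun r => sp r / delta).
  split; first by split; move=> x; apply: divr_ge0; rewrite ?(ltW dpos) ?Hl ?Hsm ?Hsp.
  split.
  + move=> i; have /eqP := Ex i; rewrite subr_eq0 => /eqP H.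
    by rewrite sc -mulrDl H mulfK.
  + move=> r; have /eqP := Ey r; rewrite subr_eq0 => /eqP H.
    by rewrite sc -mulrBl H mulfK.
  + have := sc (fun _ => 1).
    have e1 (f : Eidx E -> R) : \sum_k 1 * f k = \sum_k f k.
      by apply: eq_bigr => k _; rewrite mul1r.
    rewrite !e1 => ->; move/eqP: Es; rewrite subr_eq0 => /eqP ->; exact: divff.
  + rewrite ws_scale; move/eqP: Ew; rewrite subr_eq0 => /eqP ->; exact: mulfK.
- move=> l' Hl'; rewrite npos_eq.
  have h1 := bound _ Hl'.
  rewrite -(leq_add2r 1); apply: (leq_trans h1); apply: (leq_trans upper).
  by rewrite leq_add2l; case: (gamma).
Qed.
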